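(* For every $\omega>0$, every eigenvalue $\eta$ of the preconditioned matrix $\mathcal F_\omega^{-1}\mathcal R$ satisfies $$|\eta-1|\le\sigma(\omega),$$ where $\sigma(\omega)<1$. That is, all eigenvalues lie in the closed disk of radius $\sigma(\omega)$ centered at $1$.
   Context: Let $M\ge 1$ be an integer and let $I$ denote an identity matrix of the appropriate size. Let $T\in\mathbb R^{M\times M}$ be real symmetric positive definite, with spectrum $\lambda(T)$. Let $D\in\mathbb R^{M\times M}$ be diagonal with nonnegative diagonal entries. Define the block matrices in $\mathbb R^{2M\times 2M}$: $$\mathcal R=\begin{bmatrix} I & T-D\\ D-T & I\end{bmatrix},\qquad \mathcal T=\begin{bmatrix} I & T\\ -T & I\end{bmatrix},\qquad \mathcal D=\begin{bmatrix} 0 & -D\\ D & 0\end{bmatrix}.$$ Thus $\mathcal R=\mathcal T+\mathcal D$. For $\omega>0$, the NASS preconditioner is $$\mathcal F_\omega=\tfrac{1}{2\omega}(\omega I+\mathcal T)(\omega I+\mathcal D).$$ Also define $$\sigma(\omega)=\max_{\lambda\in\lambda(T)}\sqrt{\frac{(\omega-1)^2+\lambda^2}{(\omega+1)^2+\lambda^2}} .$$ *)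

(* Defs.v *)
From HB Require Import structures.
From mathcomp Require Import all_boot all_order all_algebra.
From mathcomp Require Import polyrcf complex.
Set Implicit Arguments. Unset Strict Implicit. Unset Printing Implicit Defensive.
Import Order.TTheory GRing.Theory Num.Theory.
Local Open Scope ring_scope.

Section NASS.
Variables (R : rcfType) (M : nat).

Definition calR (T D : 'M[R]_M) : 'M[R]_(M + M) :=
  block_mx 1%:M (T - D) (D - T) 1%:M.
Definition calT (T : 'M[R]_M) : 'M[R]_(M + M) :=
  block_mx 1%:M T (- T) 1%:M.
Definition calD (D : 'M[R]_M) : 'M[R]_(M + M) :=
  block_mx 0 (- D) D 0.

Definition NASS (omega : R) (T D : 'M[R]_M) : 'M[R]_(M + M) :=
  (2 * omega)^-1 *: ((omega%:M + calT T) *m (omega%:M + calD D)).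

(* spectrum of T: the real roots of its characteristic polynomial
   (for symmetric T, all eigenvalues are real) *)
Definition spectrum (T : 'M[R]_M) : seq R := rootsR (char_poly T).

Definition sigma (T : 'M[R]_M) (omega : R) : R :=
  \big[Num.max/0]_(l <- spectrum T)
     Num.sqrt (((omega - 1) ^+ 2 + l ^+ 2) / ((omega + 1) ^+ 2 + l ^+ 2)).

Definition posdef (T : 'M[R]_M) : Prop :=
  forall x : 'cV[R]_M, x != 0 -> 0 < (x^T *m T *m x) 0 0.

Definition is_diag_nonneg (D : 'M[R]_M) : Prop :=
  (forall i j : 'I_M, i != j -> D i j = 0) /\ (forall i : 'I_M, 0 <= D i i).

End NASS.

Definition cplx_mx (R : rcfType) m n (A : 'M[R]_(m, n)) : 'M[complex R]_(m, n) :=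
  map_mx (fun x : R => x%:C)%C A.

(* Main.v *)
Require Import Defs.
From HB Require Import structures.
From mathcomp Require Import all_boot all_order all_algebra.
From mathcomp Require Import polyrcf complex.
From mathcomp Require Import sesquilinear spectral.
From mathcomp Require Import ring lra.
Set Implicit Arguments. Unset Strict Implicit. Unset Printing Implicit Defensive.
Import Order.TTheory GRing.Theory Num.Theory.
Local Open Scope ring_scope.

Definition adj (C : numClosedFieldType) m n (A : 'M[C]_(m, n)) : 'M[C]_(n, m) :=
  map_mx Num.conj (trmx A).

Definition nrm (C : numClosedFieldType) n (r : 'rV[C]_n) : C := (r *m adj r) 0 0.

Lemma adjM (C : numClosedFieldType) m n p (A : 'M[C]_(m, n)) (B : 'M[C]_(n, p)) :
  adj (A *m B) = adj B *m adj A.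
Proof. by rewrite /adj trmx_mul map_mxM. Qed.

Lemma adjD (C : numClosedFieldType) m n (A B : 'M[C]_(m, n)) :
  adj (A + B) = adj A + adj B.
Proof. by rewrite /adj linearD map_mxD. Qed.

Lemma adjN (C : numClosedFieldType) m n (A : 'M[C]_(m, n)) :
  adj (- A) = - adj A.
Proof. by rewrite /adj linearN map_mxN. Qed.

Lemma adjK (C : numClosedFieldType) m n (A : 'M[C]_(m, n)) : adj (adj A) = A.
Proof. by apply/matrixP => i j; rewrite !mxE conjCK. Qed.

Lemma adj_scalar (C : numClosedFieldType) n (a : C) :
  adj (a%:M : 'M_n) = (a^*)%:M.
Proof. by apply/matrixP => i j; rewrite !mxE eq_sym; case: eqP => _; rewrite ?mulr1n ?mulr0n ?conjC0. Qed.

Lemma nrmE (C : numClosedFieldType) n (r : 'rV[C]_n) :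
  nrm r = \sum_j r 0 j * (r 0 j)^*.
Proof. by rewrite /nrm mxE; apply: eq_bigr => j _; rewrite !mxE. Qed.

Lemma nrm_ge0 (C : numClosedFieldType) n (r : 'rV[C]_n) : 0 <= nrm r.
Proof. by rewrite nrmE; apply: sumr_ge0 => j _; exact: mul_conjC_ge0. Qed.

Lemma nrm_eq0 (C : numClosedFieldType) n (r : 'rV[C]_n) : nrm r = 0 -> r = 0.
Proof.
rewrite nrmE => /eqP; rewrite psumr_eq0; last by move=> j _; exact: mul_conjC_ge0.
move=> /allP H; apply/rowP => j; rewrite mxE.
by have := H j (mem_index_enum j); rewrite implyTb mul_conjC_eq0 => /eqP.
Qed.

Lemma nrmMr (C : numClosedFieldType) n m (r : 'rV[C]_n) (X : 'M[C]_(n, m)) :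
  nrm (r *m X) = (r *m (X *m adj X) *m adj r) 0 0.
Proof. by rewrite /nrm adjM !mulmxA. Qed.

Lemma nrmZ (C : numClosedFieldType) n (a : C) (r : 'rV[C]_n) :
  nrm (a *: r) = a * a^* * nrm r.
Proof.
rewrite !nrmE mulr_sumr; apply: eq_bigr => j _; rewrite mxE rmorphM /=.
by rewrite -!mulrA; congr (_ * _); rewrite mulrCA.
Qed.

Lemma nrmN (C : numClosedFieldType) n (r : 'rV[C]_n) : nrm (- r) = nrm r.
Proof. by rewrite -scaleN1r nrmZ rmorphN rmorph1 mulrNN mulr1 mul1r. Qed.

Lemma nrm_row_mx (C : numClosedFieldType) n1 n2 (a : 'rV[C]_n1) (b : 'rV[C]_n2) :
  nrm (row_mx a b) = nrm a + nrm b.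
Proof.
rewrite /nrm /adj tr_row_mx map_col_mx mul_row_col mxE; done.
Qed.

Lemma nrm_skew (C : numClosedFieldType) n (S : 'M[C]_n) (a : C) (r : 'rV[C]_n) :
  adj S = - S -> a^* = a ->
  nrm (r *m (a%:M + S)) = a * a * nrm r + nrm (r *m S).
Proof.
move=> HS Ha.
have E : (a%:M + S) *m adj (a%:M + S) = (a * a)%:M + S *m adj S.
  rewrite adjD adj_scalar Ha HS mulmxDl !mulmxDr mul_scalar_mx mul_mx_scalar.
  rewrite scalar_mxM mul_scalar_mx.
  by rewrite mul_scalar_mx scalerN addrA addrNK.
rewrite nrmMr E mulmxDr mulmxDl mxE; congr (_ + _).
  by rewrite mul_mx_scalar -scalemxAl mxE.
by rewrite nrmMr.
Qed.

Lemma unit_of_inj (F : fieldType) n (A : 'M[F]_n) :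
  (forall r : 'rV_n, r *m A = 0 -> r = 0) -> A \in unitmx.
Proof.
move=> H; rewrite -row_free_unit -kermx_eq0; apply/eqP/row_matrixP => i.
rewrite row0; apply: H; apply/sub_kermxP; exact: row_sub.
Qed.

Lemma herm_bound (C : numClosedFieldType) n (Tc : 'M[C]_n) (a b s : C) :
  adj Tc = Tc ->
  (forall d, eigenvalue Tc d -> d \is Num.real -> a + d * d <= s * (b + d * d)) ->
  forall u : 'rV_n, a * nrm u + nrm (u *m Tc) <= s * (b * nrm u + nrm (u *m Tc)).
Proof.
move=> hadj hev u.
have herm : Tc \is hermsymmx.
  by apply/is_hermitianmxP; rewrite expr0 scale1r; exact: (esym hadj).
set P := spectralmx Tc; set d := spectral_diag Tc.
have hT : Tc = invmx P *m diag_mx d *m P.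
  exact/orthomx_spectralP/hermitian_normalmx.
have PU : P *m adj P = 1%:M by apply/unitarymxP/spectral_unitarymx.
have Pu : P \in unitmx by exact: spectral_unit.
have iP : invmx P = adj P by rewrite invmx_unitary // spectral_unitarymx.
have nU : forall x : 'rV_n, nrm (x *m P) = nrm x.
  by move=> x; rewrite nrmMr PU mulmx1.
have dreal : forall j, d 0 j \is Num.real.
  by move=> j; have /mxOverP := hermitian_spectral_diag_real herm; apply.
have deig : forall j, eigenvalue Tc (d 0 j).
  move=> j; apply/eigenvalueP; exists (row j P).
    rewrite -row_mul hT !mulmxA mulmxV // mul1mx mul_diag_mx.
    by apply/rowP => k; rewrite !mxE.
  apply/eqP => hr0.
  have := congr1 (row j) PU; rewrite row_mul hr0 mul0mx => /rowP /(_ j).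
  by rewrite !mxE eqxx /= => /eqP; rewrite eq_sym oner_eq0.
set y := u *m adj P.
have hu : u = y *m P by rewrite /y -mulmxA -iP mulVmx // mulmx1.
have huT : u *m Tc = y *m diag_mx d *m P.
  by rewrite {1}hT hu !mulmxA (mulmxK Pu).
rewrite huT nU hu nU !nrmE; clearbody y.
have E : forall c : C, c * (\sum_j y 0 j * (y 0 j)^*) + \sum_j (y *m diag_mx d) 0 j * ((y *m diag_mx d) 0 j)^*
   = \sum_j (y 0 j * (y 0 j)^*) * (c + d 0 j * d 0 j).
  move=> c; rewrite mulr_sumr -big_split /=; apply: eq_bigr => j _.
  rewrite mul_mx_diag !mxE.
  rewrite rmorphM /= (conj_Creal (dreal j)) mulrDr; congr (_ + _).
    by rewrite mulrC.
  by rewrite -!mulrA; congr (_ * _); rewrite mulrCA.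
rewrite !E mulr_sumr; apply: ler_sum => j _.
rewrite mulrCA; apply: ler_wpM2l; first exact: mul_conjC_ge0.
exact: hev.
Qed.

Definition skewT (C : numClosedFieldType) m (Tc : 'M[C]_m) : 'M[C]_(m + m) :=
  block_mx 0 Tc (- Tc) 0.

Lemma adj_skewT (C : numClosedFieldType) m (Tc : 'M[C]_m) :
  adj Tc = Tc -> adj (skewT Tc) = - skewT Tc.
Proof.
move=> h; rewrite /adj /skewT tr_block_mx map_block_mx -/(adj Tc) -/(adj (- Tc)).
rewrite adjN h !linear0 map_mx0 /=.
by rewrite -[RHS]scaleN1r scale_block_mx !scaleN1r opprK oppr0.
Qed.

Lemma nrm_skewT (C : numClosedFieldType) m (Tc : 'M[C]_m) (r1 r2 : 'rV[C]_m) :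
  nrm (row_mx r1 r2 *m skewT Tc) = nrm (r2 *m Tc) + nrm (r1 *m Tc).
Proof.
rewrite /skewT mul_row_block !mulmx0 add0r addr0 nrm_row_mx mulmxN nrmN.
done.
Qed.

Lemma T_part (C : numClosedFieldType) m (Tc : 'M[C]_m) (a b s : C) (r : 'rV[C]_(m + m)) :
  adj Tc = Tc -> a^* = a -> b^* = b ->
  (forall u : 'rV_m, a * a * nrm u + nrm (u *m Tc) <= s * (b * b * nrm u + nrm (u *m Tc))) ->
  nrm (r *m (a%:M - skewT Tc)) <= s * nrm (r *m (b%:M + skewT Tc)).
Proof.
move=> hT ha hb hu.
have hS := adj_skewT hT.
rewrite nrm_skew //; last by rewrite adjN hS.
rewrite nrm_skew // mulmxN nrmN.
rewrite -(hsubmxK r) nrm_skewT nrm_row_mx.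
have := lerD (hu (lsubmx r)) (hu (rsubmx r)).
set n1 := nrm (lsubmx r); set n2 := nrm (rsubmx r).
set t1 := nrm (lsubmx r *m Tc); set t2 := nrm (rsubmx r *m Tc).
rewrite (_ : a * a * n1 + t1 + (a * a * n2 + t2) = a * a * (n1 + n2) + (t2 + t1)); last by ring.
by rewrite (_ : s * (b * b * n1 + t1) + s * (b * b * n2 + t2) = s * (b * b * (n1 + n2) + (t2 + t1))); last by ring.
Qed.

Lemma zid (V : zmodType) (A X Y Z : V) : A + Y + (X + Z) - ((X + Y) + (X + Y)) = A - Y + (- X + Z).
Proof.
rewrite !opprD !addrA (addrAC _ Z) -(addrA _ X) addrN addr0 addrAC (addrAC _ Z (-Y)).
rewrite -(addrA _ Y) addrN addr0.
by rewrite (addrAC A Z) (addrAC _ Z).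
Qed.

Lemma key_id (F : comPzRingType) n (Tk Dk : 'M[F]_n) (w : F) :
  (w%:M + Tk) *m (w%:M + Dk) - (2 * w) *: (Tk + Dk) = (w%:M - Tk) *m (w%:M - Dk).
Proof.
rewrite !mulmxDl !mulmxDr ?mulmxN ?mulNmx ?opprK !mul_scalar_mx !mul_mx_scalar.
rewrite mulr_natl -scalerMnl mulr2n scalerDr.
exact: zid.
Qed.

Lemma eig_chain (F : fieldType) n (Tk Dk : 'M[F]_n) (w eta : F) (v : 'rV_n) :
  (2 * w) != 0 ->
  (w%:M + Tk) \in unitmx -> (w%:M + Dk) \in unitmx ->
  v *m (invmx ((2 * w)^-1 *: ((w%:M + Tk) *m (w%:M + Dk))) *m (Tk + Dk)) = eta *: v ->
  (v *m invmx (w%:M + Dk)) *m (invmx (w%:M + Tk) *m (w%:M - Tk) *m ((w%:M - Dk) *m invmx (w%:M + Dk)))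
   = (1 - eta) *: (v *m invmx (w%:M + Dk)).
Proof.
set P := w%:M + Tk; set Q := w%:M + Dk; set G := (2 * w)^-1 *: (P *m Q).
move=> h2 PU QU hv.
have GU : G \in unitmx by rewrite unitmxZ ?unitfE ?invr_eq0 // unitmx_mul PU QU.
have E : invmx P *m (w%:M - Tk) *m ((w%:M - Dk) *m invmx Q)
    = 1%:M - (2 * w) *: (invmx P *m (Tk + Dk) *m invmx Q).
  rewrite mulmxA -(mulmxA (invmx P)) -key_id -/P -/Q mulmxBr mulmxBl.
  by rewrite mulmxA (mulVmx PU) mul1mx (mulmxV QU) -scalemxAr -scalemxAl.
set s := v *m invmx Q; set w' := v *m invmx G.
have hv' : v = w' *m G by rewrite /w' mulmxKV.
have hs : s *m invmx P = (2 * w)^-1 *: w'.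
  rewrite /s {1}hv' /G -scalemxAr -scalemxAl -scalemxAl !mulmxA (mulmxK QU) (mulmxK PU).
  done.
rewrite E mulmxBr mulmx1 -scalemxAr !mulmxA hs -!scalemxAl scalerA mulfV // scale1r.
rewrite /w' -(mulmxA v (invmx G)) hv -scalemxAl -/s.
by rewrite scalerBl scale1r.
Qed.

Lemma cplx_adj (R : rcfType) m n (A : 'M[R]_(m, n)) : adj (cplx_mx A) = cplx_mx A^T.
Proof.
apply/matrixP => i j; rewrite !mxE; apply: conj_Creal; apply/complex_realP; eauto.
Qed.

Lemma cplxM (R : rcfType) m n p (A : 'M[R]_(m, n)) (B : 'M[R]_(n, p)) :
  cplx_mx (A *m B) = cplx_mx A *m cplx_mx B.
Proof. exact: map_mxM. Qed.

Lemma cplxD (R : rcfType) m n (A B : 'M[R]_(m, n)) :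
  cplx_mx (A + B) = cplx_mx A + cplx_mx B.
Proof. exact: map_mxD. Qed.

Lemma cplxN (R : rcfType) m n (A : 'M[R]_(m, n)) :
  cplx_mx (- A) = - cplx_mx A.
Proof. exact: map_mxN. Qed.

Lemma cplxZ (R : rcfType) m n a (A : 'M[R]_(m, n)) :
  cplx_mx (a *: A) = (a%:C)%C *: cplx_mx A.
Proof. exact: map_mxZ. Qed.

Lemma cplx_scalar (R : rcfType) n (a : R) :
  cplx_mx (a%:M : 'M_n) = ((a%:C)%C)%:M.
Proof. exact: map_scalar_mx. Qed.

Lemma cplx_inv (R : rcfType) n (A : 'M[R]_n) :
  cplx_mx (invmx A) = invmx (cplx_mx A).
Proof. exact: map_invmx. Qed.

Lemma cplx0 (R : rcfType) m n : cplx_mx (0 : 'M[R]_(m, n)) = 0.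
Proof. exact: map_mx0. Qed.

Lemma cplx_block (R : rcfType) m1 m2 n1 n2 (A : 'M[R]_(m1, n1)) (B : 'M[R]_(m1, n2))
  (C : 'M[R]_(m2, n1)) (E : 'M[R]_(m2, n2)) :
  cplx_mx (block_mx A B C E) = block_mx (cplx_mx A) (cplx_mx B) (cplx_mx C) (cplx_mx E).
Proof. exact: map_block_mx. Qed.

Lemma cplx_calT (R : rcfType) M (T : 'M[R]_M) :
  cplx_mx (calT T) = 1%:M + skewT (cplx_mx T).
Proof.
rewrite /calT cplx_block cplxN cplx_scalar rmorph1 /skewT scalar_mx_block add_block_mx.
by rewrite !addr0 !add0r.
Qed.

Lemma cplx_calD (R : rcfType) M (D : 'M[R]_M) :
  cplx_mx (calD D) = skewT (- cplx_mx D).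
Proof.
by rewrite /calD cplx_block cplxN cplx0 /skewT opprK.
Qed.

Lemma cplx_calR (R : rcfType) M (T D : 'M[R]_M) :
  cplx_mx (calR T D) = cplx_mx (calT T) + cplx_mx (calD D).
Proof.
rewrite -cplxD /calR /calT /calD add_block_mx !addr0; congr cplx_mx.
by rewrite (addrC (- T)).
Qed.

Lemma cplx_NASS (R : rcfType) M (omega : R) (T D : 'M[R]_M) :
  cplx_mx (NASS omega T D) = (2 * omega%:C)%C^-1 *:
     (((omega%:C)%C%:M + cplx_mx (calT T)) *m ((omega%:C)%C%:M + cplx_mx (calD D))).
Proof.
rewrite /NASS cplxZ cplxM !cplxD !cplx_scalar.
by congr (_ *: _); rewrite fmorphV rmorphM rmorph_nat.
Qed.

Lemma sigma_ge0 (R : rcfType) M (T : 'M[R]_M) omega : 0 <= sigma T omega.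
Proof.
rewrite /sigma; apply: (big_ind (fun x => 0 <= x)) => //.
  by move=> x y hx hy; rewrite le_max hx.
by move=> i _; exact: sqrtr_ge0.
Qed.

Lemma sigma_lt1 (R : rcfType) M (T : 'M[R]_M) omega : 0 < omega -> sigma T omega < 1.
Proof.
move=> hw; rewrite /sigma; apply: bigmax_lt => // l _.
have hb : 0 < (omega + 1) ^+ 2 + l ^+ 2.
  by rewrite !expr2; nra.
rewrite -[ltRHS]sqrtr1 ltr_sqrt // ltr_pdivrMr //.
by rewrite mul1r !expr2; nra.
Qed.

Lemma sigma_bound (R : rcfType) M (T : 'M[R]_M) omega l : 0 < omega -> l \in spectrum T ->
  (omega - 1) ^+ 2 + l ^+ 2 <= (sigma T omega) ^+ 2 * ((omega + 1) ^+ 2 + l ^+ 2).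
Proof.
move=> hw hl.
have hb : 0 < (omega + 1) ^+ 2 + l ^+ 2 by rewrite !expr2; nra.
have ha : 0 <= (omega - 1) ^+ 2 + l ^+ 2 by rewrite addr_ge0 ?sqr_ge0.
have h1 : Num.sqrt (((omega - 1) ^+ 2 + l ^+ 2) / ((omega + 1) ^+ 2 + l ^+ 2)) <= sigma T omega.
  exact: (le_bigmax_seq 0 l xpredT (fun l => Num.sqrt (((omega - 1) ^+ 2 + l ^+ 2) / ((omega + 1) ^+ 2 + l ^+ 2))) hl).
rewrite -ler_pdivrMr // -(sqr_sqrtr (divr_ge0 ha (ltW hb))).
by apply: lerXn2r => //; rewrite nnegrE ?sqrtr_ge0 ?sigma_ge0.
Qed.

Lemma eig_spectrum (R : rcfType) M (T : 'M[R]_M) (d : R[i]) :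
  eigenvalue (cplx_mx T) d -> d \is Num.real -> complex.Re d \in spectrum T.
Proof.
move=> he hr; move: he; rewrite eigenvalue_root_char -(RRe_real hr).
rewrite /cplx_mx -map_char_poly fmorph_root => hroot.
rewrite /spectrum -(roots_on_rootsR (monic_neq0 (char_poly_monic T))).
by rewrite hroot andbT.
Qed.

Lemma scB (F : pzRingType) n (a b : F) : ((a - b)%:M : 'M_n) = a%:M - b%:M.
Proof. by apply/matrixP => i j; rewrite !mxE mulrnBl. Qed.

Lemma scD (F : pzRingType) n (a b : F) : ((a + b)%:M : 'M_n) = a%:M + b%:M.
Proof. by apply/matrixP => i j; rewrite !mxE mulrnDl. Qed.

Lemma unit_of_nrm (C : numClosedFieldType) n (A : 'M[C]_n) (c : C) :
  0 < c -> (forall r : 'rV_n, c * nrm r <= nrm (r *m A)) -> A \in unitmx.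
Proof.
move=> hc h; apply: unit_of_inj => r hr.
have := h r; rewrite hr (_ : nrm (0 : 'rV_n) = 0); last first.
  by rewrite nrmE big1 // => j _; rewrite mxE mul0r.
rewrite pmulr_rle0 // => hle; apply: nrm_eq0; apply/eqP.
by rewrite eq_le hle nrm_ge0.
Qed.

Lemma comm_sc (F : comPzRingType) n (a b : F) (A : 'M[F]_n) :
  (a%:M + A) *m (b%:M - A) = (b%:M - A) *m (a%:M + A).
Proof.
rewrite !mulmxDl !mulmxDr !mulmxN !mulNmx !mul_scalar_mx !mul_mx_scalar.
rewrite !scale_scalar_mx mulrC -!addrA; congr (_ + _).
by rewrite addrCA.
Qed.

Lemma comm_inv (F : fieldType) n (A B : 'M[F]_n) :
  B \in unitmx -> B *m A = A *m B -> A *m invmx B = invmx B *m A.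
Proof.
move=> hB hAB.
by rewrite -[LHS]mul1mx -(mulVmx hB) -mulmxA (mulmxA B) hAB (mulmxK hB).
Qed.

Lemma conj_real (R : rcfType) (x : R) : (x%:C)%C^* = (x%:C)%C.
Proof. by apply: conj_Creal; apply/complex_realP; exists x. Qed.

Theorem theorem4p1 (R : rcfType) (M : nat) (T D : 'M[R]_M) :
  (0 < M)%N ->
  T^T = T -> posdef T ->
  is_diag_nonneg D ->
  forall omega : R, 0 < omega ->
    sigma T omega < 1 /\
    (forall eta : complex R,
       eigenvalue (cplx_mx (invmx (NASS omega T D) *m calR T D)) eta ->
       `|eta - 1| <= ((sigma T omega)%:C)%C).
Proof.
move=> _ hTs _ [hDd hD0] omega hw.
split; first exact: sigma_lt1.
move=> eta.
set sg := sigma T omega.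
set w := (omega%:C)%C.
set Tc := cplx_mx T.
have hTadj : adj Tc = Tc by rewrite cplx_adj hTs.
have hDadj : adj (- cplx_mx D) = - cplx_mx D.
  rewrite adjN cplx_adj; congr (- cplx_mx _); apply/matrixP => i j; rewrite mxE.
  by case: (eqVneq i j) => [->|hij] //; rewrite !hDd // eq_sym.
set S := skewT Tc; set Dk := skewT (- cplx_mx D).
have hS : adj S = - S := adj_skewT hTadj.
have hDk : adj Dk = - Dk := adj_skewT hDadj.
rewrite cplxM cplx_inv cplx_NASS cplx_calR cplx_calT cplx_calD -/Tc -/S -/Dk.
move=> /eigenvalueP [v hv vn0].
have hw0 : 0 < w by rewrite /w ltcR.
have hwr : Num.conj w = w by exact: conj_real.
have h2w : 2 * w != 0 by rewrite mulf_neq0 ?pnatr_eq0 ?gt_eqF.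
have ew1 : w + 1 = ((omega + 1)%:C)%C by rewrite rmorphD rmorph1.
have ew1' : w - 1 = ((omega - 1)%:C)%C by rewrite rmorphB rmorph1.
have hw1r : Num.conj (w + 1) = w + 1 by rewrite ew1 conj_real.
have hw1r' : Num.conj (w - 1) = w - 1 by rewrite ew1' conj_real.
have hP : w%:M + (1%:M + S) = (w + 1)%:M + S by rewrite scD addrA.
have hPm : w%:M - (1%:M + S) = (w - 1)%:M - S by rewrite scB opprD addrA.
have PU : (w%:M + (1%:M + S)) \in unitmx.
  rewrite hP; apply: (@unit_of_nrm _ _ _ ((w + 1) * (w + 1))).
    by rewrite mulr_gt0 // ltr_wpDr.
  by move=> r; rewrite nrm_skew // lerDl nrm_ge0.
have QU : (w%:M + Dk) \in unitmx.
  apply: (@unit_of_nrm _ _ _ (w * w)); first by rewrite mulr_gt0.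
  by move=> r; rewrite nrm_skew // lerDl nrm_ge0.
have := eig_chain h2w PU QU hv.
set P := w%:M + (1%:M + S); set Q := w%:M + Dk.
set s := v *m invmx Q => hs.
have sn0 : s != 0.
  by apply: contra vn0 => /eqP hs0; rewrite -(mulmxKV QU v) -/s hs0 mul0mx.
have hb : forall u : 'rV_M, (w - 1) * (w - 1) * nrm u + nrm (u *m Tc)
    <= (sg%:C)%C * (sg%:C)%C * ((w + 1) * (w + 1) * nrm u + nrm (u *m Tc)).
  apply: herm_bound => // d hd hr.
  have hl := sigma_bound hw (eig_spectrum hd hr).
  rewrite -(RRe_real hr); move: (complex.Re d) hl => l hl.
  have e1 : (((omega - 1) ^+ 2 + l ^+ 2)%:C)%C = (w - 1) * (w - 1) + (l%:C)%C * (l%:C)%C.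
    by rewrite /w !expr2 rmorphD !rmorphM rmorphB rmorph1.
  have e2 : ((sg ^+ 2 * ((omega + 1) ^+ 2 + l ^+ 2))%:C)%C
      = (sg%:C)%C * (sg%:C)%C * ((w + 1) * (w + 1) + (l%:C)%C * (l%:C)%C).
    by rewrite /w !expr2 !rmorphM rmorphD !rmorphM rmorphD rmorph1.
  by rewrite -e1 -e2 lecR.
set r1 := s *m invmx P.
have hT1 : nrm (r1 *m (w%:M - (1%:M + S))) <= (sg%:C)%C * (sg%:C)%C * nrm s.
  rewrite hPm; have -> : nrm s = nrm (r1 *m ((w + 1)%:M + S)) by rewrite -hP /r1 mulmxKV.
  exact: T_part.
set t := r1 *m (w%:M - (1%:M + S)).
have hcomm : (w%:M - Dk) *m invmx Q = invmx Q *m (w%:M - Dk).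
  by apply: comm_inv => //; rewrite /Q comm_sc.
move: hs; rewrite !mulmxA -/r1 -/t -(mulmxA t) hcomm mulmxA.
set u := t *m invmx Q => hs.
have hu : nrm (u *m (w%:M - Dk)) = nrm t.
  have -> : t = u *m Q by rewrite /u mulmxKV.
  have hDk' : adj (- Dk) = - - Dk by rewrite adjN hDk.
  rewrite /Q (@nrm_skew _ _ Dk w u hDk hwr) (@nrm_skew _ _ (- Dk) w u hDk' hwr).
  by rewrite mulmxN nrmN.
move: hT1; rewrite -/t -hu hs nrmZ => hT1.
have spos : 0 < nrm s.
  by rewrite lt_def nrm_ge0 andbT; apply: contra sn0 => /eqP /nrm_eq0 ->.
move: hT1; rewrite ler_pM2r // -normCK -expr2 => h.
have sgC0 : 0 <= (sg%:C)%C.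
  by rewrite -(rmorph0 (real_complex R)) lecR sigma_ge0.
rewrite distrC -ler_sqr ?nnegrE ?normr_ge0 //.
Qed.
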